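(* Let $\mathcal F_2$ be the set consisting of the following five graphs: the path $P_4$ on four vertices; $K_5\setminus S_2$ (the complete graph on 5 vertices with the two edges of a path $uvw$ removed, i.e. one vertex non-adjacent to exactly two others); $K_6\setminus M_2$ (the complete graph on 6 vertices with two disjoint edges removed); the graph on vertices $1,\dots,5$ with edges $24,34,23,14,45$ (a triangle with two pendant vertices attached to the same vertex of the triangle); and the graph on vertices $1,\dots,5$ with edges $12,14,23,24,34,45$ (the diamond $K_4$ minus the edge $13$, together with a pendant vertex $5$ attached to the degree-3 vertex $4$). Then $\mathcal F_2\subseteq {\bf Forb}(\Gamma_{\le 2})$.
   Context: For a finite graph $G$ and indeterminates $X_G=\{x_u : u\in V(G)\}$, the generalized Laplacian matrix $L(G,X_G)$ is the $V(G)\times V(G)$ matrix over $\mathbb{Z}[X_G]$ with $(u,u)$-entry $x_u$ and $(u,v)$-entry $-m_{uv}$ for $u\ne v$, $m_{uv}$ being the number of edges between $u$ and $v$. The $i$-th critical ideal $I_i(G,X_G)$ is the ideal of $\mathbb{Z}[X_G]$ generated by all $i\times i$ minors of $L(G,X_G)$ (with $I_i=\langle1\rangle$ for $i<1$, $I_i=\langle 0\rangle$ for $i>|V(G)|$). The algebraic co-rank $\gamma(G)$ is the number of critical ideals of $G$ equal to $\langle 1\rangle$. $\Gamma_{\le k}$ is the set of simple connected graphs $G$ with $\gamma(G)\le k$. ${\bf Forb}(\Gamma_{\le k})$ is the set of minimal (with respect to induced subgraphs) simple connected graphs $G$ with $\gamma(G)\ge k+1$; equivalently, the simple connected graphs $G$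 with $\gamma(G)=k+1$ such that $\gamma(G\setminus v)<\gamma(G)$ for every vertex $v$. *)

(* Defs.v *)
From HB Require Import structures.
From mathcomp Require Import all_boot all_order all_algebra.
From mathcomp Require Import mpoly.
From Stdlib Require Import ClassicalEpsilon.

Set Implicit Arguments.
Unset Strict Implicit.
Unset Printing Implicit Defensive.

Import GRing.Theory.
Local Open Scope ring_scope.

Definition simple_graph (n : nat) (e : rel 'I_n) : Prop :=
  (forall u v, e u v = e v u) /\ (forall u, e u u = false).

Definition connected_graph (n : nat) (e : rel 'I_n) : Prop :=
  forall u v, connect e u v.

Definition gen_laplacian (n : nat) (e : rel 'I_n) : 'M[{mpoly int[n]}]_n :=
  \matrix_(u, v) (if u == v then 'X_u else - ((e u v : nat)%:R)).

Definition is_minor (n i : nat) (L : 'M[{mpoly int[n]}]_n) (p : {mpoly int[n]}) : Prop :=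
  exists (f g : 'I_i -> 'I_n), injective f /\ injective g /\
    p = \det (\matrix_(a, b) L (f a) (g b)).

(* The i-th critical ideal I_i(G, X_G) (ideal of Z[X_G] generated by the
   i x i minors) is the unit ideal <1>, i.e. 1 is a Z[X_G]-linear combination
   of finitely many i x i minors. For i = 0 this holds (det of the empty
   matrix is 1); for i > n there are no minors, so the ideal is <0>. *)
Definition critical_ideal_trivial (n : nat) (e : rel 'I_n) (i : nat) : Prop :=
  exists (m : nat) (c p : 'I_m -> {mpoly int[n]}),
    (forall j, is_minor i (gen_laplacian e) (p j)) /\
    \sum_(j < m) c j * p j = 1.

Definition pbool (P : Prop) : bool :=
  if excluded_middle_informative P then true else false.

Definition gamma (n : nat) (e : rel 'I_n) : nat :=
  (\sum_(1 <= i < n.+1) pbool (critical_ideal_trivial e i))%N.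

Definition del_vertex (n : nat) (e : rel 'I_n.+1) (v : 'I_n.+1) : rel 'I_n :=
  fun a b => e (lift v a) (lift v b).

Definition in_Forb (k n : nat) (e : rel 'I_n.+1) : Prop :=
  [/\ simple_graph e, connected_graph e, gamma e = k.+1 &
      forall v, (gamma (del_vertex e v) < gamma e)%N].

Definition graph_of_edges (n : nat) (E : seq (nat * nat)) : rel 'I_n :=
  fun u v => ((nat_of_ord u, nat_of_ord v) \in E) || ((nat_of_ord v, nat_of_ord u) \in E).

Definition complete_minus (n : nat) (E : seq (nat * nat)) : rel 'I_n :=
  fun u v => (u != v) && ~~ @graph_of_edges n E u v.

Definition P4 : rel 'I_4 := @graph_of_edges 4 [:: (0,1); (1,2); (2,3)]%N.
Definition K5_minus_S2 : rel 'I_5 := @complete_minus 5 [:: (0,1); (1,2)]%N.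
Definition K6_minus_M2 : rel 'I_6 := @complete_minus 6 [:: (0,1); (2,3)]%N.
(* vertices 1..5, edges 24,34,23,14,45 (shifted to 0..4) *)
Definition G4 : rel 'I_5 := @graph_of_edges 5 [:: (1,3); (2,3); (1,2); (0,3); (3,4)]%N.
(* vertices 1..5, edges 12,14,23,24,34,45 (shifted to 0..4) *)
Definition G5 : rel 'I_5 := @graph_of_edges 5 [:: (0,1); (0,3); (1,2); (1,3); (2,3); (3,4)]%N.

(* Main.v *)
Require Import Defs.
From mathcomp Require Import all_boot all_order all_algebra.
From mathcomp Require Import mpoly.
From mathcomp Require Import zify ring.
From Stdlib Require Import ClassicalEpsilon.
Set Implicit Arguments.
Unset Strict Implicit.
Unset Printing Implicit Defensive.
Import GRing.Theory Num.Theory.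
Local Open Scope ring_scope.

Definition ordS (n k : nat) : 'I_n.+1 := Ordinal (ltn_pmod k (ltn0Sn n)).

Lemma val_ordS n k : (k < n.+1)%N -> val (ordS n k) = k.
Proof. by move=> h; rewrite /= modn_small. Qed.

Lemma ordS_val n (u : 'I_n.+1) : ordS n u = u.
Proof. by apply/val_inj; rewrite val_ordS. Qed.

Fixpoint sumf (k : nat) (F : nat -> int) : int :=
  if k is k'.+1 then sumf k' F + F k' else 0.

Lemma sumfE k (F : nat -> int) : \sum_(t < k) F t = sumf k F.
Proof. by elim: k => [|k IH]; rewrite ?big_ord0 // big_ord_recr /= IH. Qed.

Lemma pboolT (P : Prop) : P -> pbool P = true.
Proof. by rewrite /pbool; case: excluded_middle_informative. Qed.
Lemma pboolF (P : Prop) : ~ P -> pbool P = false.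
Proof. by rewrite /pbool; case: excluded_middle_informative. Qed.

Lemma all_iotaP n (P : nat -> bool) : all P (iota 0 n) -> forall k, (k < n)%N -> P k.
Proof. by move=> /allP H k hk; apply: H; rewrite mem_iota. Qed.

Lemma forall_ordS n (P : 'I_n.+1 -> Prop) :
  (forall k, (k < n.+1)%N -> P (ordS n k)) -> forall u, P u.
Proof. by move=> H u; rewrite -(ordS_val u); apply: H. Qed.

Lemma simple_cert n (e : rel 'I_n.+1) :
  all (fun a => all (fun b => (e (ordS n a) (ordS n b) == e (ordS n b) (ordS n a))
     && ((a == b) ==> ~~ e (ordS n a) (ordS n b))) (iota 0 n.+1)) (iota 0 n.+1) ->
  simple_graph e.
Proof.
move=> H; split.
- move=> u v; rewrite -(ordS_val u) -(ordS_val v).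
  have Hu := all_iotaP H (ltn_ord u).
  by have /andP[/eqP -> _] := all_iotaP Hu (ltn_ord v).
- move=> u; rewrite -(ordS_val u).
  have Hu := all_iotaP H (ltn_ord u).
  by have /andP[_] := all_iotaP Hu (ltn_ord u); rewrite eqxx /= => /negbTE.
Qed.

Lemma conn_cert n (e : rel 'I_n.+1) (r : nat) (par d : seq nat) :
  (forall u v, e u v = e v u) -> (r < n.+1)%N ->
  all (fun k => if nth 0%N d k is j.+1 then
        [&& nth 0%N d (nth 0%N par k) == j, (nth 0%N par k < n.+1)%N &
            e (ordS n k) (ordS n (nth 0%N par k))]
        else k == r) (iota 0 n.+1) ->
  connected_graph e.
Proof.
move=> sym hr H.
have key : forall j k, (k < n.+1)%N -> nth 0%N d k = j -> connect e (ordS n k) (ordS n r).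
  elim=> [|j IH] k hk.
    move=> h0; have := all_iotaP H hk; rewrite h0 => /eqP ->; exact: connect0.
  move=> hj; have := all_iotaP H hk; rewrite hj => /and3P[/eqP hd hp he].
  apply: connect_trans (connect1 he) (IH _ hp hd).
have csym : connect_sym e by apply: sym_connect_sym => u v; rewrite sym.
move=> u v; rewrite -(ordS_val u) -(ordS_val v).
apply: connect_trans (key _ _ (ltn_ord u) erefl) _.
by rewrite csym; apply: key (ltn_ord v) erefl.
Qed.

Lemma det_lowrank (F : fieldType) i k (X : 'M[F]_(i, k)) (Y : 'M[F]_(k, i)) :
  (k < i)%N -> \det (X *m Y) = 0.
Proof.
move=> ki; apply/eqP; apply: contraTT ki => h.
have : row_free (X *m Y) by rewrite row_free_unit unitmxE unitfE.
rewrite /row_free => /eqP hr.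
rewrite -leqNgt -[X in (X <= _)%N]hr.
exact: leq_trans (mxrankM_maxl _ _) (rank_leq_col _).
Qed.

Lemma det_lowrank_int i k (X : 'M[int]_(i, k)) (Y : 'M[int]_(k, i)) :
  (k < i)%N -> \det (X *m Y) = 0.
Proof.
move=> ki; have := det_lowrank (map_mx (intr : int -> rat) X) (map_mx intr Y) ki.
by rewrite -map_mxM det_map_mx => /eqP; rewrite intr_eq0 => /eqP.
Qed.

Lemma nontriv n (e : rel 'I_n.+1) i k (xs : seq int) (Bl Cl : seq (seq int)) :
  (k < i)%N ->
  all (fun a => all (fun b =>
     (if a == b then nth 0 xs a else - ((e (ordS n a) (ordS n b) : nat)%:R))
       == sumf k (fun t => nth 0 (nth [::] Bl a) t * nth 0 (nth [::] Cl t) b))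
     (iota 0 n.+1)) (iota 0 n.+1) ->
  ~ critical_ideal_trivial e i.
Proof.
move=> ki chk [m [c [p [hp hs]]]].
pose xv : 'I_n.+1 -> int := fun u => nth 0 xs u.
pose B : 'M[int]_(n.+1, k) := \matrix_(u, t) nth 0 (nth [::] Bl u) t.
pose C : 'M[int]_(k, n.+1) := \matrix_(t, v) nth 0 (nth [::] Cl t) v.
have hL : map_mx (meval xv) (gen_laplacian e) = B *m C.
  apply/matrixP => u v; rewrite !mxE.
  have Hu := all_iotaP chk (ltn_ord u).
  have := all_iotaP Hu (ltn_ord v); rewrite !ordS_val -sumfE => /eqP.
  move=> hh.
  rewrite (eq_bigr (fun t : 'I_k => (nth [::] Bl u)`_t * (nth [::] Cl t)`_v)); last first.
    by move=> t _; rewrite !mxE.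
  rewrite -hh.
  case: (eqVneq u v) => [->|ne]; first by rewrite !eqxx mevalXU.
  have -> : (nat_of_ord u == nat_of_ord v) = false by apply/negbTE.
  by rewrite ?(negbTE ne) mevalN rmorph_nat.
have hp0 : forall j, meval xv (p j) = 0.
  move=> j; case: (hp j) => f [g [_ [_ ->]]].
  rewrite -det_map_mx.
  have -> : map_mx (meval xv) (\matrix_(a, b) gen_laplacian e (f a) (g b))
     = (\matrix_(a, t) B (f a) t) *m (\matrix_(t, b) C t (g b)).
    apply/matrixP => a b; rewrite !mxE.
    have := hL; move/matrixP/(_ (f a) (g b)); rewrite !mxE => ->.
    by apply: eq_bigr => t _; rewrite !mxE.
  exact: det_lowrank_int.
have := congr1 (meval xv) hs.
rewrite rmorph_sum /= meval1.
under eq_bigr do rewrite mevalM hp0 mulr0.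
by rewrite big1 // => /eqP; rewrite eq_sym oner_eq0.
Qed.

Lemma det33 (R : comNzRingType) (a : nat -> nat -> R) : \det (\matrix_(i < 3, j < 3) a i j) =
  a 0%N 0%N * (a 1%N 1%N * a 2%N 2%N - a 1%N 2%N * a 2%N 1%N)
  - a 0%N 1%N * (a 1%N 0%N * a 2%N 2%N - a 1%N 2%N * a 2%N 0%N)
  + a 0%N 2%N * (a 1%N 0%N * a 2%N 1%N - a 1%N 1%N * a 2%N 0%N).
Proof.
rewrite (expand_det_row _ 0) !big_ord_recr big_ord0 /= /cofactor.
rewrite !(expand_det_row _ 0) !big_ord_recr !big_ord0 /= /cofactor.
rewrite !det_mx11 !mxE /=.
rewrite !expr0 !expr1 /=. ring.
Qed.

Lemma inj_cert n i (fl : seq nat) : size fl = i -> uniq fl -> all (fun x => x < n.+1)%N fl ->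
  injective (fun a : 'I_i => ordS n (nth 0%N fl a)).
Proof.
move=> hs hu /allP hr a b /(congr1 val).
have hin : forall a : 'I_i, (nth 0%N fl a < n.+1)%N.
  by move=> x; apply: hr; apply: mem_nth; rewrite hs.
rewrite !val_ordS // => /eqP; rewrite nth_uniq ?hs // => /eqP h.
exact: val_inj.
Qed.

Definition lapE n (e : rel 'I_n.+1) (k l : nat) : {mpoly int[n.+1]} :=
  if (k == l)%N then 'X_(ordS n k) else - ((e (ordS n k) (ordS n l) : nat)%:R).

Lemma lapEP n (e : rel 'I_n.+1) k l : (k < n.+1)%N -> (l < n.+1)%N ->
  gen_laplacian e (ordS n k) (ordS n l) = lapE e k l.
Proof.
move=> hk hl; rewrite mxE /lapE.
have -> : (ordS n k == ordS n l) = (k == l)%N by rewrite -val_eqE /= !modn_small.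
by case: eqP => // ->.
Qed.

Lemma triv_tri n (e : rel 'I_n.+1) i (fl gl : seq nat) :
  size fl = i -> size gl = i -> uniq fl -> uniq gl ->
  all (fun x => x < n.+1)%N fl -> all (fun x => x < n.+1)%N gl ->
  all (fun a => all (fun b => (b < a)%N || ((nth 0%N fl a != nth 0%N gl b) &&
     (e (ordS n (nth 0%N fl a)) (ordS n (nth 0%N gl b)) == (a == b)))) (iota 0 i)) (iota 0 i) ->
  critical_ideal_trivial e i.
Proof.
move=> sf sg uf ug rf rg chk.
have hf : forall a : 'I_i, (nth 0%N fl a < n.+1)%N.
  by move=> x; apply: (allP rf); apply: mem_nth; rewrite sf.
have hg : forall a : 'I_i, (nth 0%N gl a < n.+1)%N.
  by move=> x; apply: (allP rg); apply: mem_nth; rewrite sg.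
pose f := fun a : 'I_i => ordS n (nth 0%N fl a).
pose g := fun a : 'I_i => ordS n (nth 0%N gl a).
pose M := \matrix_(a, b) gen_laplacian e (f a) (g b).
have hM : forall a b : 'I_i, (a <= b)%N -> M a b = if a == b then -1 else 0.
  move=> a b hab; rewrite mxE /f /g lapEP // /lapE.
  have Ha := all_iotaP chk (ltn_ord a).
  have /orP[|/andP[hne /eqP he]] := all_iotaP Ha (ltn_ord b); first by rewrite ltnNge hab.
  rewrite (negbTE hne) he.
  by rewrite (_ : (nat_of_ord a == nat_of_ord b) = (a == b)) //; case: (a == b); rewrite /= ?oppr0.
exists 1%N, (fun _ => (-1) ^+ i), (fun _ => \det M); split.
  move=> j; exists f, g; split; [exact: inj_cert|split; [exact: inj_cert|done]].
rewrite big_ord1 det_trig; last first.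
  apply/is_trig_mxP => a b hab; rewrite hM ?(ltnW hab) //.
  by case: eqP => // h; rewrite h ltnn in hab.
rewrite (eq_bigr (fun _ => -1)); last by move=> a _; rewrite hM // eqxx.
by rewrite prodr_const card_ord -exprMn mulrNN mulr1 expr1n.
Qed.

Lemma triv3 n (e : rel 'I_n.+1) (fl gl : seq nat) (c : int) :
  size fl = 3%N -> size gl = 3%N -> uniq fl -> uniq gl ->
  all (fun x => x < n.+1)%N fl -> all (fun x => x < n.+1)%N gl ->
  (let a x y := lapE e (nth 0%N fl x) (nth 0%N gl y) in
   c%:~R * (a 0%N 0%N * (a 1%N 1%N * a 2%N 2%N - a 1%N 2%N * a 2%N 1%N)
  - a 0%N 1%N * (a 1%N 0%N * a 2%N 2%N - a 1%N 2%N * a 2%N 0%N)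
  + a 0%N 2%N * (a 1%N 0%N * a 2%N 1%N - a 1%N 1%N * a 2%N 0%N)) = 1) ->
  critical_ideal_trivial e 3.
Proof.
move=> sf sg uf ug rf rg /= H.
have hf : forall a : 'I_3, (nth 0%N fl a < n.+1)%N.
  by move=> x; apply: (allP rf); apply: mem_nth; rewrite sf.
have hg : forall a : 'I_3, (nth 0%N gl a < n.+1)%N.
  by move=> x; apply: (allP rg); apply: mem_nth; rewrite sg.
pose f := fun a : 'I_3 => ordS n (nth 0%N fl a).
pose g := fun a : 'I_3 => ordS n (nth 0%N gl a).
exists 1%N, (fun _ => c%:~R), (fun _ => \det (\matrix_(a, b) gen_laplacian e (f a) (g b))); split.
  move=> j; exists f, g; split; [exact: inj_cert|split; [exact: inj_cert|done]].
rewrite big_ord1.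
have -> : \matrix_(a, b) gen_laplacian e (f a) (g b) =
          \matrix_(a < 3, b < 3) lapE e (nth 0%N fl a) (nth 0%N gl b).
  by apply/matrixP => a b; rewrite [LHS]mxE [RHS]mxE /f /g lapEP.
by rewrite (det33 (fun x y => lapE e (nth 0%N fl x) (nth 0%N gl y))).
Qed.

Lemma gamma_eq3 n (e : rel 'I_n) : (3 <= n)%N ->
  critical_ideal_trivial e 1 -> critical_ideal_trivial e 2 -> critical_ideal_trivial e 3 ->
  (forall i, (3 < i)%N -> ~ critical_ideal_trivial e i) -> gamma e = 3%N.
Proof.
move=> hn h1 h2 h3 hi; rewrite /gamma (@big_cat_nat _ _ _ 4) //.
rewrite big_ltn // big_ltn // big_ltn // big_geq // (pboolT h1) (pboolT h2) (pboolT h3).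
rewrite big_nat_cond big1 // => i /andP[/andP[hi4 _] _].
by rewrite pboolF //; apply: hi.
Qed.

Lemma gamma_le2 n (e : rel 'I_n) : (forall i, (2 < i)%N -> ~ critical_ideal_trivial e i) ->
  (gamma e <= 2)%N.
Proof.
move=> hi; rewrite /gamma.
suff : forall N, (\sum_(1 <= i < N) pbool (critical_ideal_trivial e i) <= minn N.-1 2)%N.
  by move=> /(_ n.+1) H; apply: leq_trans H _; rewrite geq_minr.
elim=> [|N IH]; first by rewrite big_geq.
case: N IH => [|N] IH; first by rewrite big_geq.
rewrite big_nat_recr //=.
have hb : (pbool (critical_ideal_trivial e N.+1) <= 1)%N by case: pbool.
case: (ltnP 2 N.+1) => h.
  rewrite pboolF ?addn0; last exact: hi.
  move: IH h => /=; lia.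
move: IH hb h => /=; lia.
Qed.

Ltac evalb := repeat match goal with
  | |- context [if ?c then _ else _] =>
     lazymatch c with true => fail | false => fail | _ =>
       let v := eval vm_compute in c in change c with v end
  | |- context [nat_of_bool ?c] =>
     lazymatch c with true => fail | false => fail | _ =>
       let v := eval vm_compute in c in change c with v end
  end; cbv beta iota delta [nat_of_bool].
Ltac vmc := vm_compute; reflexivity.

Lemma forb_P4 : in_Forb 2 P4.
Proof.
have hs : simple_graph P4 by apply: simple_cert; vmc.
have g3 : gamma P4 = 3%N.
  apply: gamma_eq3 => //.
  - by apply: (@triv_tri 3 P4 1 [:: 0]%N [:: 1]%N); vmc.
  - by apply: (@triv_tri 3 P4 2 [:: 0; 1]%N [:: 1; 2]%N); vmc.
  - by apply: (@triv_tri 3 P4 3 [:: 0; 1; 2]%N [:: 1; 2; 3]%N); vmc.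
  - move=> i hi; apply: (@nontriv 3 P4 i 3 [:: (-2 : int); (-1 : int); (-1 : int); (1 : int)] [:: [:: (2 : int); (1 : int); (0 : int)]; [:: (1 : int); (0 : int); (0 : int)]; [:: (0 : int); (-1 : int); (1 : int)]; [:: (0 : int); (0 : int); (-1 : int)]] [:: [:: (-1 : int); (-1 : int); (-1 : int); (0 : int)]; [:: (0 : int); (1 : int); (2 : int); (0 : int)]; [:: (0 : int); (0 : int); (1 : int); (-1 : int)]]) => //; vmc.
split => //.
- case: hs => hsym _; apply: (@conn_cert 3 P4 0 [:: 0; 0; 1; 2]%N [:: 0; 1; 2; 3]%N) => //; vmc.
- rewrite g3; apply: forall_ordS => k hk.
  case: k hk => [|[|[|[|k]]]] hk //; rewrite ltnS; apply: gamma_le2 => i hi.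
  + by apply: (@nontriv 2 (del_vertex P4 (ordS 3 0)) i 2 [:: (-2 : int); (-1 : int); (-2 : int)] [:: [:: (2 : int); (1 : int)]; [:: (1 : int); (0 : int)]; [:: (0 : int); (-1 : int)]] [:: [:: (-1 : int); (-1 : int); (-1 : int)]; [:: (0 : int); (1 : int); (2 : int)]]) => //; vmc.
  + by apply: (@nontriv 2 (del_vertex P4 (ordS 3 1)) i 2 [:: (-2 : int); (-1 : int); (-1 : int)] [:: [:: (1 : int); (0 : int)]; [:: (0 : int); (1 : int)]; [:: (0 : int); (1 : int)]] [:: [:: (-2 : int); (0 : int); (0 : int)]; [:: (0 : int); (-1 : int); (-1 : int)]]) => //; vmc.
  + by apply: (@nontriv 2 (del_vertex P4 (ordS 3 2)) i 2 [:: (-2 : int); (-2 : int); (0 : int)] [:: [:: (2 : int); (1 : int)]; [:: (1 : int); (0 : int)]; [:: (0 : int); (0 : int)]] [:: [:: (-1 : int); (-2 : int); (0 : int)]; [:: (0 : int); (3 : int); (0 : int)]]) => //; vmc.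
  + by apply: (@nontriv 2 (del_vertex P4 (ordS 3 3)) i 2 [:: (-2 : int); (-1 : int); (-2 : int)] [:: [:: (2 : int); (1 : int)]; [:: (1 : int); (0 : int)]; [:: (0 : int); (-1 : int)]] [:: [:: (-1 : int); (-1 : int); (-1 : int)]; [:: (0 : int); (1 : int); (2 : int)]]) => //; vmc.
Qed.

Lemma forb_K5S2 : in_Forb 2 K5_minus_S2.
Proof.
have hs : simple_graph K5_minus_S2 by apply: simple_cert; vmc.
have g3 : gamma K5_minus_S2 = 3%N.
  apply: gamma_eq3 => //.
  - by apply: (@triv_tri 4 K5_minus_S2 1 [:: 0]%N [:: 2]%N); vmc.
  - by apply: (@triv_tri 4 K5_minus_S2 2 [:: 0; 3]%N [:: 2; 1]%N); vmc.
  - apply: (@triv3 4 K5_minus_S2 [:: 0; 1; 3]%N [:: 1; 2; 4]%N (-1)); [done|done|done|done|done|done|].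
    cbv zeta beta iota delta [lapE nth]; evalb; ring.
  - move=> i hi; apply: (@nontriv 4 K5_minus_S2 i 3 [:: (-2 : int); (-1 : int); (0 : int); (-1 : int); (-1 : int)] [:: [:: (2 : int); (0 : int); (1 : int)]; [:: (0 : int); (1 : int); (0 : int)]; [:: (1 : int); (0 : int); (0 : int)]; [:: (1 : int); (1 : int); (1 : int)]; [:: (1 : int); (1 : int); (1 : int)]] [:: [:: (-1 : int); (0 : int); (0 : int); (-1 : int); (-1 : int)]; [:: (0 : int); (-1 : int); (0 : int); (-1 : int); (-1 : int)]; [:: (0 : int); (0 : int); (-1 : int); (1 : int); (1 : int)]]) => //; vmc.
split => //.
- case: hs => hsym _; apply: (@conn_cert 4 K5_minus_S2 0 [:: 0; 3; 0; 0; 0]%N [:: 0; 2; 1; 1; 1]%N) => //; vmc.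
- rewrite g3; apply: forall_ordS => k hk.
  case: k hk => [|[|[|[|[|k]]]]] hk //; rewrite ltnS; apply: gamma_le2 => i hi.
  + by apply: (@nontriv 3 (del_vertex K5_minus_S2 (ordS 4 0)) i 2 [:: (-2 : int); (-2 : int); (-1 : int); (-1 : int)] [:: [:: (2 : int); (-1 : int)]; [:: (0 : int); (1 : int)]; [:: (1 : int); (0 : int)]; [:: (1 : int); (0 : int)]] [:: [:: (-1 : int); (-1 : int); (-1 : int); (-1 : int)]; [:: (0 : int); (-2 : int); (-1 : int); (-1 : int)]]) => //; vmc.
  + by apply: (@nontriv 3 (del_vertex K5_minus_S2 (ordS 4 1)) i 2 [:: (-2 : int); (-1 : int); (-1 : int); (-1 : int)] [:: [:: (2 : int); (1 : int)]; [:: (1 : int); (0 : int)]; [:: (1 : int); (0 : int)]; [:: (1 : int); (0 : int)]] [:: [:: (-1 : int); (-1 : int); (-1 : int); (-1 : int)]; [:: (0 : int); (1 : int); (1 : int); (1 : int)]]) => //; vmc.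
  + by apply: (@nontriv 3 (del_vertex K5_minus_S2 (ordS 4 2)) i 2 [:: (-2 : int); (-2 : int); (-1 : int); (-1 : int)] [:: [:: (2 : int); (-1 : int)]; [:: (0 : int); (1 : int)]; [:: (1 : int); (0 : int)]; [:: (1 : int); (0 : int)]] [:: [:: (-1 : int); (-1 : int); (-1 : int); (-1 : int)]; [:: (0 : int); (-2 : int); (-1 : int); (-1 : int)]]) => //; vmc.
  + by apply: (@nontriv 3 (del_vertex K5_minus_S2 (ordS 4 3)) i 2 [:: (-1 : int); (-1 : int); (-1 : int); (-2 : int)] [:: [:: (1 : int); (0 : int)]; [:: (0 : int); (1 : int)]; [:: (1 : int); (0 : int)]; [:: (1 : int); (1 : int)]] [:: [:: (-1 : int); (0 : int); (-1 : int); (-1 : int)]; [:: (0 : int); (-1 : int); (0 : int); (-1 : int)]]) => //; vmc.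
  + by apply: (@nontriv 3 (del_vertex K5_minus_S2 (ordS 4 4)) i 2 [:: (-1 : int); (-1 : int); (-1 : int); (-2 : int)] [:: [:: (1 : int); (0 : int)]; [:: (0 : int); (1 : int)]; [:: (1 : int); (0 : int)]; [:: (1 : int); (1 : int)]] [:: [:: (-1 : int); (0 : int); (-1 : int); (-1 : int)]; [:: (0 : int); (-1 : int); (0 : int); (-1 : int)]]) => //; vmc.
Qed.

Lemma forb_K6M2 : in_Forb 2 K6_minus_M2.
Proof.
have hs : simple_graph K6_minus_M2 by apply: simple_cert; vmc.
have g3 : gamma K6_minus_M2 = 3%N.
  apply: gamma_eq3 => //.
  - by apply: (@triv_tri 5 K6_minus_M2 1 [:: 0]%N [:: 2]%N); vmc.
  - by apply: (@triv_tri 5 K6_minus_M2 2 [:: 0; 2]%N [:: 2; 1]%N); vmc.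
  - apply: (@triv3 5 K6_minus_M2 [:: 0; 2; 4]%N [:: 1; 3; 5]%N (-1)); [done|done|done|done|done|done|].
    cbv zeta beta iota delta [lapE nth]; evalb; ring.
  - move=> i hi; apply: (@nontriv 5 K6_minus_M2 i 3 [:: (-2 : int); (-2 : int); (-2 : int); (-2 : int); (-1 : int); (-1 : int)] [:: [:: (2 : int); (-1 : int); (2 : int)]; [:: (0 : int); (1 : int); (0 : int)]; [:: (1 : int); (0 : int); (0 : int)]; [:: (1 : int); (0 : int); (2 : int)]; [:: (1 : int); (0 : int); (1 : int)]; [:: (1 : int); (0 : int); (1 : int)]] [:: [:: (-1 : int); (-1 : int); (-2 : int); (0 : int); (-1 : int); (-1 : int)]; [:: (0 : int); (-2 : int); (-1 : int); (-1 : int); (-1 : int); (-1 : int)]; [:: (0 : int); (0 : int); (1 : int); (-1 : int); (0 : int); (0 : int)]]) => //; vmc.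
split => //.
- case: hs => hsym _; apply: (@conn_cert 5 K6_minus_M2 0 [:: 0; 2; 0; 0; 0; 0]%N [:: 0; 2; 1; 1; 1; 1]%N) => //; vmc.
- rewrite g3; apply: forall_ordS => k hk.
  case: k hk => [|[|[|[|[|[|k]]]]]] hk //; rewrite ltnS; apply: gamma_le2 => i hi.
  + by apply: (@nontriv 4 (del_vertex K6_minus_M2 (ordS 5 0)) i 2 [:: (-1 : int); (-2 : int); (-2 : int); (-1 : int); (-1 : int)] [:: [:: (1 : int); (0 : int)]; [:: (1 : int); (1 : int)]; [:: (1 : int); (-1 : int)]; [:: (1 : int); (0 : int)]; [:: (1 : int); (0 : int)]] [:: [:: (-1 : int); (-1 : int); (-1 : int); (-1 : int); (-1 : int)]; [:: (0 : int); (-1 : int); (1 : int); (0 : int); (0 : int)]]) => //; vmc.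
  + by apply: (@nontriv 4 (del_vertex K6_minus_M2 (ordS 5 1)) i 2 [:: (-1 : int); (-2 : int); (-2 : int); (-1 : int); (-1 : int)] [:: [:: (1 : int); (0 : int)]; [:: (1 : int); (1 : int)]; [:: (1 : int); (-1 : int)]; [:: (1 : int); (0 : int)]; [:: (1 : int); (0 : int)]] [:: [:: (-1 : int); (-1 : int); (-1 : int); (-1 : int); (-1 : int)]; [:: (0 : int); (-1 : int); (1 : int); (0 : int); (0 : int)]]) => //; vmc.
  + by apply: (@nontriv 4 (del_vertex K6_minus_M2 (ordS 5 2)) i 2 [:: (-2 : int); (-2 : int); (-1 : int); (-1 : int); (-1 : int)] [:: [:: (2 : int); (-1 : int)]; [:: (0 : int); (1 : int)]; [:: (1 : int); (0 : int)]; [:: (1 : int); (0 : int)]; [:: (1 : int); (0 : int)]] [:: [:: (-1 : int); (-1 : int); (-1 : int); (-1 : int); (-1 : int)]; [:: (0 : int); (-2 : int); (-1 : int); (-1 : int); (-1 : int)]]) => //; vmc.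
  + by apply: (@nontriv 4 (del_vertex K6_minus_M2 (ordS 5 3)) i 2 [:: (-2 : int); (-2 : int); (-1 : int); (-1 : int); (-1 : int)] [:: [:: (2 : int); (-1 : int)]; [:: (0 : int); (1 : int)]; [:: (1 : int); (0 : int)]; [:: (1 : int); (0 : int)]; [:: (1 : int); (0 : int)]] [:: [:: (-1 : int); (-1 : int); (-1 : int); (-1 : int); (-1 : int)]; [:: (0 : int); (-2 : int); (-1 : int); (-1 : int); (-1 : int)]]) => //; vmc.
  + by apply: (@nontriv 4 (del_vertex K6_minus_M2 (ordS 5 4)) i 2 [:: (0 : int); (0 : int); (0 : int); (0 : int); (-2 : int)] [:: [:: (0 : int); (1 : int)]; [:: (0 : int); (1 : int)]; [:: (1 : int); (0 : int)]; [:: (1 : int); (0 : int)]; [:: (1 : int); (1 : int)]] [:: [:: (-1 : int); (-1 : int); (0 : int); (0 : int); (-1 : int)]; [:: (0 : int); (0 : int); (-1 : int); (-1 : int); (-1 : int)]]) => //; vmc.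
  + by apply: (@nontriv 4 (del_vertex K6_minus_M2 (ordS 5 5)) i 2 [:: (0 : int); (0 : int); (0 : int); (0 : int); (-2 : int)] [:: [:: (0 : int); (1 : int)]; [:: (0 : int); (1 : int)]; [:: (1 : int); (0 : int)]; [:: (1 : int); (0 : int)]; [:: (1 : int); (1 : int)]] [:: [:: (-1 : int); (-1 : int); (0 : int); (0 : int); (-1 : int)]; [:: (0 : int); (0 : int); (-1 : int); (-1 : int); (-1 : int)]]) => //; vmc.
Qed.

Lemma forb_G4 : in_Forb 2 G4.
Proof.
have hs : simple_graph G4 by apply: simple_cert; vmc.
have g3 : gamma G4 = 3%N.
  apply: gamma_eq3 => //.
  - by apply: (@triv_tri 4 G4 1 [:: 0]%N [:: 3]%N); vmc.
  - by apply: (@triv_tri 4 G4 2 [:: 0; 1]%N [:: 3; 2]%N); vmc.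
  - by apply: (@triv_tri 4 G4 3 [:: 0; 1; 3]%N [:: 3; 2; 4]%N); vmc.
  - move=> i hi; apply: (@nontriv 4 G4 i 3 [:: (-2 : int); (-1 : int); (-1 : int); (-2 : int); (-2 : int)] [:: [:: (2 : int); (-2 : int); (1 : int)]; [:: (0 : int); (1 : int); (0 : int)]; [:: (0 : int); (1 : int); (0 : int)]; [:: (1 : int); (0 : int); (0 : int)]; [:: (0 : int); (0 : int); (-1 : int)]] [:: [:: (-1 : int); (-1 : int); (-1 : int); (-2 : int); (-1 : int)]; [:: (0 : int); (-1 : int); (-1 : int); (-1 : int); (0 : int)]; [:: (0 : int); (0 : int); (0 : int); (1 : int); (2 : int)]]) => //; vmc.
split => //.
- case: hs => hsym _; apply: (@conn_cert 4 G4 0 [:: 0; 3; 3; 0; 3]%N [:: 0; 2; 2; 1; 2]%N) => //; vmc.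
- rewrite g3; apply: forall_ordS => k hk.
  case: k hk => [|[|[|[|[|k]]]]] hk //; rewrite ltnS; apply: gamma_le2 => i hi.
  + by apply: (@nontriv 3 (del_vertex G4 (ordS 4 0)) i 2 [:: (-1 : int); (-1 : int); (-2 : int); (-1 : int)] [:: [:: (1 : int); (0 : int)]; [:: (1 : int); (0 : int)]; [:: (1 : int); (1 : int)]; [:: (0 : int); (1 : int)]] [:: [:: (-1 : int); (-1 : int); (-1 : int); (0 : int)]; [:: (0 : int); (0 : int); (-1 : int); (-1 : int)]]) => //; vmc.
  + by apply: (@nontriv 3 (del_vertex G4 (ordS 4 1)) i 2 [:: (0 : int); (0 : int); (-2 : int); (0 : int)] [:: [:: (0 : int); (1 : int)]; [:: (0 : int); (1 : int)]; [:: (1 : int); (0 : int)]; [:: (0 : int); (1 : int)]] [:: [:: (-1 : int); (-1 : int); (-2 : int); (-1 : int)]; [:: (0 : int); (0 : int); (-1 : int); (0 : int)]]) => //; vmc.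
  + by apply: (@nontriv 3 (del_vertex G4 (ordS 4 2)) i 2 [:: (0 : int); (0 : int); (-2 : int); (0 : int)] [:: [:: (0 : int); (1 : int)]; [:: (0 : int); (1 : int)]; [:: (1 : int); (0 : int)]; [:: (0 : int); (1 : int)]] [:: [:: (-1 : int); (-1 : int); (-2 : int); (-1 : int)]; [:: (0 : int); (0 : int); (-1 : int); (0 : int)]]) => //; vmc.
  + by apply: (@nontriv 3 (del_vertex G4 (ordS 4 3)) i 2 [:: (-2 : int); (-1 : int); (-1 : int); (0 : int)] [:: [:: (1 : int); (0 : int)]; [:: (0 : int); (1 : int)]; [:: (0 : int); (1 : int)]; [:: (0 : int); (0 : int)]] [:: [:: (-2 : int); (0 : int); (0 : int); (0 : int)]; [:: (0 : int); (-1 : int); (-1 : int); (0 : int)]]) => //; vmc.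
  + by apply: (@nontriv 3 (del_vertex G4 (ordS 4 4)) i 2 [:: (-1 : int); (-1 : int); (-1 : int); (-2 : int)] [:: [:: (1 : int); (0 : int)]; [:: (0 : int); (1 : int)]; [:: (0 : int); (1 : int)]; [:: (1 : int); (1 : int)]] [:: [:: (-1 : int); (0 : int); (0 : int); (-1 : int)]; [:: (0 : int); (-1 : int); (-1 : int); (-1 : int)]]) => //; vmc.
Qed.

Lemma forb_G5 : in_Forb 2 G5.
Proof.
have hs : simple_graph G5 by apply: simple_cert; vmc.
have g3 : gamma G5 = 3%N.
  apply: gamma_eq3 => //.
  - by apply: (@triv_tri 4 G5 1 [:: 0]%N [:: 1]%N); vmc.
  - by apply: (@triv_tri 4 G5 2 [:: 0; 1]%N [:: 1; 2]%N); vmc.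
  - by apply: (@triv_tri 4 G5 3 [:: 0; 1; 3]%N [:: 1; 2; 4]%N); vmc.
  - move=> i hi; apply: (@nontriv 4 G5 i 3 [:: (-2 : int); (-1 : int); (-2 : int); (-2 : int); (-1 : int)] [:: [:: (2 : int); (1 : int); (0 : int)]; [:: (1 : int); (0 : int); (0 : int)]; [:: (0 : int); (-1 : int); (0 : int)]; [:: (1 : int); (0 : int); (1 : int)]; [:: (0 : int); (0 : int); (1 : int)]] [:: [:: (-1 : int); (-1 : int); (-1 : int); (-1 : int); (0 : int)]; [:: (0 : int); (1 : int); (2 : int); (1 : int); (0 : int)]; [:: (0 : int); (0 : int); (0 : int); (-1 : int); (-1 : int)]]) => //; vmc.
split => //.
- case: hs => hsym _; apply: (@conn_cert 4 G5 0 [:: 0; 0; 1; 0; 3]%N [:: 0; 1; 2; 1; 2]%N) => //; vmc.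
- rewrite g3; apply: forall_ordS => k hk.
  case: k hk => [|[|[|[|[|k]]]]] hk //; rewrite ltnS; apply: gamma_le2 => i hi.
  + by apply: (@nontriv 3 (del_vertex G5 (ordS 4 0)) i 2 [:: (-1 : int); (-1 : int); (-2 : int); (-1 : int)] [:: [:: (1 : int); (0 : int)]; [:: (1 : int); (0 : int)]; [:: (1 : int); (1 : int)]; [:: (0 : int); (1 : int)]] [:: [:: (-1 : int); (-1 : int); (-1 : int); (0 : int)]; [:: (0 : int); (0 : int); (-1 : int); (-1 : int)]]) => //; vmc.
  + by apply: (@nontriv 3 (del_vertex G5 (ordS 4 1)) i 2 [:: (0 : int); (0 : int); (-2 : int); (0 : int)] [:: [:: (0 : int); (1 : int)]; [:: (0 : int); (1 : int)]; [:: (1 : int); (0 : int)]; [:: (0 : int); (1 : int)]] [:: [:: (-1 : int); (-1 : int); (-2 : int); (-1 : int)]; [:: (0 : int); (0 : int); (-1 : int); (0 : int)]]) => //; vmc.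
  + by apply: (@nontriv 3 (del_vertex G5 (ordS 4 2)) i 2 [:: (-1 : int); (-1 : int); (-2 : int); (-1 : int)] [:: [:: (1 : int); (0 : int)]; [:: (1 : int); (0 : int)]; [:: (1 : int); (1 : int)]; [:: (0 : int); (1 : int)]] [:: [:: (-1 : int); (-1 : int); (-1 : int); (0 : int)]; [:: (0 : int); (0 : int); (-1 : int); (-1 : int)]]) => //; vmc.
  + by apply: (@nontriv 3 (del_vertex G5 (ordS 4 3)) i 2 [:: (-2 : int); (-1 : int); (-2 : int); (0 : int)] [:: [:: (2 : int); (1 : int)]; [:: (1 : int); (0 : int)]; [:: (0 : int); (-1 : int)]; [:: (0 : int); (0 : int)]] [:: [:: (-1 : int); (-1 : int); (-1 : int); (0 : int)]; [:: (0 : int); (1 : int); (2 : int); (0 : int)]]) => //; vmc.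
  + by apply: (@nontriv 3 (del_vertex G5 (ordS 4 4)) i 2 [:: (-2 : int); (-1 : int); (-2 : int); (-1 : int)] [:: [:: (2 : int); (1 : int)]; [:: (1 : int); (0 : int)]; [:: (0 : int); (-1 : int)]; [:: (1 : int); (0 : int)]] [:: [:: (-1 : int); (-1 : int); (-1 : int); (-1 : int)]; [:: (0 : int); (1 : int); (2 : int); (1 : int)]]) => //; vmc.
Qed.

Theorem proposition4p1 :
  [/\ in_Forb 2 P4, in_Forb 2 K5_minus_S2, in_Forb 2 K6_minus_M2,
      in_Forb 2 G4 & in_Forb 2 G5].
Proof. split; [exact: forb_P4|exact: forb_K5S2|exact: forb_K6M2|exact: forb_G4|exact: forb_G5]. Qed.
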